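(* Let $A$ be a total ring of fractions, $f:A\to B$ a ring homomorphism, and $\mathfrak b$ an ideal of $B$ contained in the Jacobson radical of $B$. Let $A\bowtie^f\mathfrak b:=\{(a,f(a)+b): a\in A,\ b\in\mathfrak b\}\subseteq A\times B$. Assume at least one of the following: (a) $\mathfrak b\subseteq f(A)$; (b) $\mathfrak b$ is a torsion $A$-module (with the $A$-module structure induced by $f$). Then $A\bowtie^f\mathfrak b$ is a total ring of fractions; in particular it is a Prüfer ring.
   Context: All rings are commutative with identity. A ring is a total ring of fractions if every element is either a unit or a zerodivisor. $\mathfrak b$ is an $A$-module via $a\cdot x:=f(a)x$; it is torsion if every $x\in\mathfrak b$ is annihilated by some non-zerodivisor of $A$. A ring is a Prüfer ring if every finitely generated ideal containing a non-zerodivisor is invertible. *)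

(* Defs.v *)
From HB Require Import structures.
From mathcomp Require Import all_boot all_order all_algebra.
Set Implicit Arguments. Unset Strict Implicit. Unset Printing Implicit Defensive.
Import GRing.Theory.
Local Open Scope ring_scope.

(* All notions below are stated for a subring S (given as a predicate) of an
   ambient commutative ring R, with the ring operations of S being those of R.
   For a ring R itself take S := fun _ => True. *)
Section RelNotions.
Variables (R : comPzRingType) (S : R -> Prop).

Definition unit_in (x : R) : Prop := S x /\ exists y, S y /\ x * y = 1.
Definition zerodiv_in (x : R) : Prop :=
  S x /\ exists y, S y /\ y <> 0 /\ x * y = 0.
Definition regular_in (x : R) : Prop :=
  S x /\ forall y, S y -> x * y = 0 -> y = 0.

Definition total_frac_in : Prop :=
  forall x, S x -> unit_in x \/ zerodiv_in x.

Definition ideal_in (I : R -> Prop) : Prop :=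
  [/\ forall x, I x -> S x, I 0,
      forall x y, I x -> I y -> I (x + y) &
      forall r x, S r -> I x -> I (r * x)].

Definition fg_ideal_in (I : R -> Prop) : Prop :=
  ideal_in I /\ exists (n : nat) (g : 'I_n -> R), (forall i, S (g i)) /\
    forall x, I x <-> exists c : 'I_n -> R,
      (forall i, S (c i)) /\ x = \sum_(i < n) c i * g i.

Definition prod_ideal (I J : R -> Prop) : R -> Prop := fun x =>
  exists (n : nat) (a b : 'I_n -> R),
    (forall i, I (a i) /\ J (b i)) /\ x = \sum_(i < n) a i * b i.

(* I is invertible: I J = S for some S-submodule J of the total ring of
   fractions; equivalently (clearing a common denominator of the finitely many
   generators needed) I J = d S for an ideal J of S and a regular d of S. *)
Definition invertible_in (I : R -> Prop) : Prop :=
  exists (J : R -> Prop) (d : R), ideal_in J /\ regular_in d /\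
    forall x, prod_ideal I J x <-> exists s, S s /\ x = d * s.

Definition prufer_in : Prop :=
  forall I, fg_ideal_in I -> (exists x, I x /\ regular_in x) -> invertible_in I.

Definition maximal_ideal_in (M : R -> Prop) : Prop :=
  [/\ ideal_in M, ~ M 1 &
      forall J, ideal_in J -> (forall y, M y -> J y) ->
        J 1 \/ (forall y, J y -> M y)].

Definition jacobson_in (x : R) : Prop :=
  S x /\ forall M, maximal_ideal_in M -> M x.
End RelNotions.

Definition setT_ (R : Type) : R -> Prop := fun _ => True.
Arguments setT_ R : clear implicits.

Definition amalgamation (A B : comPzRingType) (f : {rmorphism A -> B})
  (b : B -> Prop) : (A * B)%type -> Prop :=
  fun p => exists (a : A) (y : B), b y /\ p = (a, f a + y).

(* Main.v *)
Require Import Defs.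
From HB Require Import structures.
From mathcomp Require Import all_boot all_order all_algebra.
From mathcomp Require Import boolp classical_sets ring.
Import GRing.Theory.
Local Open Scope ring_scope.
Lemma jac_unit (B : comPzRingType) (j : B) :
  jacobson_in (setT_ B) j -> exists v, (1 + j) * v = 1.
Proof.
move=> [_ Hj]; set u := 1 + j.
apply: contrapT => Hnu.
pose Q (X : B -> Prop) := ideal_in (setT_ B) X /\ X u /\ ~ X 1.
pose P : set (set B) := fun X => X = set0 \/ Q X.
have [M [PM Mmax]] : exists A, P A /\ forall C, (A `<` C)%classic -> ~ P C.
  apply: Zorn_bigcup => F FP Ftot.
  have [[X0 [FX0 X0u]]|nex] := pselect (exists X, F X /\ X u); last first.
    left; apply/seteqP; split => // x [X FX Xx].
    case: (FP X FX) => [E|[_ [Xu _]]]; first by rewrite E in Xx.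
    by exfalso; apply: nex; exists X.
  have memQ X x : F X -> X x -> Q X.
    move=> FX Xx; case: (FP X FX) => // E; by rewrite E in Xx.
  right; split; [split|split].
  - by [].
  - exists X0 => //; have [[_ ? _ _] _] := memQ _ _ FX0 X0u; done.
  - move=> x y [X FX Xx] [Y FY Yy].
    have [[_ _ XD _] _] := memQ _ _ FX Xx.
    have [[_ _ YD _] _] := memQ _ _ FY Yy.
    case: (Ftot X Y FX FY) => [XY|YX].
      by exists Y => //; apply: YD => //; apply: XY.
    by exists X => //; apply: XD => //; apply: YX.
  - move=> r x _ [X FX Xx]; have [[_ _ _ XM] _] := memQ _ _ FX Xx.
    by exists X => //; apply: XM.
  - by exists X0.
  - move=> [X FX X1]; have [_ [_ ?]] := memQ _ _ FX X1; done.
pose uB : set B := fun x => exists r, x = r * u.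
have QuB : Q uB.
  split; [split|split].
  - by [].
  - by exists 0; rewrite mul0r.
  - by move=> x y [r ->] [s ->]; exists (r + s); rewrite mulrDl.
  - by move=> r x _ [s ->]; exists (r * s); rewrite mulrA.
  - by exists 1; rewrite mul1r.
  - by move=> [r E]; apply: Hnu; exists r; rewrite mulrC -E.
have QM : Q M.
  case: PM => // E; exfalso; apply: (Mmax uB); last by right.
  rewrite E; split; first by [].
  by move=> H; have := H u (proj1 (proj2 QuB)).
have [[_ M0 MD MM] [Mu Mn1]] := QM.
have maxM : maximal_ideal_in (setT_ B) M.
  split => // J IJ MJ.
  have [J1|nJ1] := pselect (J 1); first by left.
  right => y Jy; apply: contrapT => nMy.
  apply: (Mmax J); last by right; split => //; split => //; apply: MJ.
  split; first by move=> x; apply: MJ.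
  by move=> H; apply: nMy; apply: H.
have Mj := Hj M maxM.
apply: Mn1.
have -> : (1 : B) = u + (-1) * j by rewrite /u mulN1r addrK.
by apply: MD => //; apply: MM.
Qed.

Lemma amal_closed (A B : comPzRingType) (f : {rmorphism A -> B}) (b : B -> Prop) :
  ideal_in (setT_ B) b ->
  [/\ amalgamation f b 0, amalgamation f b 1,
     forall p q, amalgamation f b p -> amalgamation f b q -> amalgamation f b (p + q)
   & forall p q, amalgamation f b p -> amalgamation f b q -> amalgamation f b (p * q)].
Proof.
move=> [_ b0 bD bM]; split.
- by exists 0, 0; split => //; rewrite rmorph0 addr0.
- by exists 1, 0; split => //; rewrite rmorph1 addr0.
- move=> _ _ [a [y [by_ ->]]] [a' [y' [by' ->]]].
  exists (a + a'), (y + y'); split; first exact: bD.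
  by rewrite /= rmorphD; congr (_, _); rewrite addrACA.
- move=> _ _ [a [y [by_ ->]]] [a' [y' [by' ->]]].
  exists (a * a'), (f a * y' + y * (f a' + y')); split.
    by apply: bD; [apply: bM | rewrite mulrC; apply: bM].
  by rewrite /= rmorphM; congr (_, _); rewrite mulrDl mulrDr addrA.
Qed.

Lemma pairM (A B : comPzRingType) (x x' : A) (y y' : B) :
  ((x, y) : (A * B)%type) * (x', y') = (x * x', y * y').
Proof. by []. Qed.
Lemma pair0 (A B : comPzRingType) : (0 : (A * B)%type) = (0, 0).
Proof. by []. Qed.

Theorem proposition4p6 (A B : comPzRingType) (f : {rmorphism A -> B})
  (b : B -> Prop) :
  total_frac_in (setT_ A) ->
  ideal_in (setT_ B) b ->
  (forall x, b x -> jacobson_in (setT_ B) x) ->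
  ((forall x, b x -> exists a : A, x = f a) \/
   (forall x, b x -> exists a : A, regular_in (setT_ A) a /\ f a * x = 0)) ->
  total_frac_in (amalgamation f b) /\ prufer_in (amalgamation f b).
Proof.
move=> totA Ib Jb hyp.
have [S0 S1 SD SM] := @amal_closed A B f b Ib.
have [_ b0 bD bM] := Ib.
set S := amalgamation f b.
have totS : total_frac_in S.
  move=> _ [a [y [by_ ->]]].
  case: (totA a I) => [[_ [a' [_ aa']]]|[_ [c [_ [c0 ac]]]]].
  - have [v uv] := @jac_unit B _ (Jb _ (bM (f a') y I by_)).
    have faa : f a * f a' = 1 by rewrite -rmorphM aa' rmorph1.
    left; split; first by exists a, y.
    exists (a', f a' + (- (f a' * f a' * v)) * y); split.
      by exists a', ((- (f a' * f a' * v)) * y); split => //; apply: bM.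
    rewrite /=; congr (_, _); first exact: aa'.
    have E : f a' + - (f a' * f a' * v) * y = f a' * v.
      transitivity (f a' * ((1 + f a' * y) * v) + - (f a' * f a' * v) * y); first by rewrite uv mulr1.
      ring.
    rewrite E -uv; have -> : (f a + y) * (f a' * v) = (f a * f a' + f a' * y) * v by ring.
    by rewrite faa.
  - right; split; first by exists a, y.
    case: hyp => [Hf|Hr].
    + have [a0 ya0] := Hf y by_; subst y.
      have [ca0|nca0] := pselect (c * a0 = 0).
      * exists (c, f c + 0); split; first by exists c, 0.
        split; first by move=> [].
        rewrite pairM pair0; congr (_, _); first exact: ac.
        rewrite addr0 -rmorphD -rmorphM mulrDl ac (mulrC a0) ca0.
        by rewrite add0r rmorph0.
      * exists (c * a0, f (c * a0) + (- f c) * f a0); split.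
          by exists (c * a0), ((- f c) * f a0); split => //; apply: bM.
        split; first by move=> [].
        rewrite pairM pair0; congr (_, _); first by rewrite mulrA ac mul0r.
        by rewrite rmorphM mulNr addrN mulr0.
    + have [s [[_ sreg] sy]] := Hr y by_.
      exists (c * s, f (c * s) + 0); split; first by exists (c * s), 0.
      split.
        case=> cs0 _; apply: c0; apply: sreg => //; by rewrite mulrC.
      rewrite pairM pair0; congr (_, _); first by rewrite mulrA ac mul0r.
      rewrite addr0 rmorphM.
      have -> : (f a + y) * (f c * f s) = f (a * c) * f s + f c * (f s * y)
        by rewrite rmorphM; ring.
      by rewrite ac sy rmorph0 !mul0r mulr0 addr0.
split => // I [[IS I0 ID IM] _] [x [Ix [Sx xreg]]].
have [[_ [y [Sy xy]]]|[_ [z [Sz [z0 xz]]]]] := totS x Sx; last first.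
  by exfalso; apply: z0; apply: xreg.
exists S, 1; split; first by split.
split; first by split => // z Sz; rewrite mul1r.
move=> z; split.
- move=> [n [a' [b' [Hab ->]]]]; exists (\sum_(i < n) a' i * b' i); split; last by rewrite mul1r.
  apply: (big_ind S); [exact: S0 | exact: SD | move=> i _].
  by have [/IS Ia Sb] := Hab i; apply: SM.
- move=> [s [Ss ->]]; exists 1%N, (fun _ => x), (fun _ => y * s); split.
    by move=> i; split => //; apply: SM.
  by rewrite big_ord1 mulrA xy !mul1r.
Qed.
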